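(* Let $A$ be a quasi-quantale and let $d$ be a multiplicative nucleus on $A$. Then the set of fixed points $A_d=\{a\in A\mid d(a)=a\}$ (with the order of $A$, joins $\bigvee^d X=d(\bigvee X)$ and meets as in $A$) is a meet-continuous lattice, i.e. $(\bigvee^d X)\wedge a=\bigvee^d\{x\wedge a\mid x\in X\}$ for every directed $X\subseteq A_d$ and every $a\in A_d$.
   Context: A quasi-quantale is a complete lattice $A$ equipped with an associative binary operation $(a,b)\mapsto ab$ such that for every directed subset $X\subseteq A$ (non-empty, and any two elements of $X$ have an upper bound in $X$) and every $a\in A$: $(\bigvee X)a=\bigvee\{xa\mid x\in X\}$ and $a(\bigvee X)=\bigvee\{ax\mid x\in X\}$. An inflator on $A$ is a monotone map $d\colon A\to A$ with $a\leq d(a)$ for all $a$. A multiplicative nucleus is an inflator $d$ with $d\circ d=d$, $d(a\wedge b)=d(a)\wedge d(b)$ and $d(ab)=d(a)\wedge d(b)$ for all $a,b\in A$. *)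

(* Defs.v *)
Definition subset_of (A : Type) := A -> Prop.

Definition is_ub {A : Type} (le : A -> A -> Prop) (X : A -> Prop) (x : A) : Prop :=
  forall y, X y -> le y x.

Definition is_lub {A : Type} (le : A -> A -> Prop) (X : A -> Prop) (x : A) : Prop :=
  is_ub le X x /\ forall z, is_ub le X z -> le x z.

Definition is_glb2 {A : Type} (le : A -> A -> Prop) (a b m : A) : Prop :=
  le m a /\ le m b /\ forall c, le c a -> le c b -> le c m.

Definition complete_lattice {A : Type} (le : A -> A -> Prop)
  (sup : (A -> Prop) -> A) (meet : A -> A -> A) : Prop :=
  (forall a, le a a) /\
  (forall a b c, le a b -> le b c -> le a c) /\
  (forall a b, le a b -> le b a -> a = b) /\
  (forall X, is_lub le X (sup X)) /\
  (forall a b, is_glb2 le a b (meet a b)).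

Definition directed {A : Type} (le : A -> A -> Prop) (X : A -> Prop) : Prop :=
  (exists x, X x) /\
  forall x y, X x -> X y -> exists z, X z /\ le x z /\ le y z.

Definition image {A : Type} (f : A -> A) (X : A -> Prop) : A -> Prop :=
  fun y => exists x, X x /\ y = f x.

Definition quasi_quantale {A : Type} (le : A -> A -> Prop)
  (sup : (A -> Prop) -> A) (meet : A -> A -> A) (mul : A -> A -> A) : Prop :=
  complete_lattice le sup meet /\
  (forall a b c, mul (mul a b) c = mul a (mul b c)) /\
  (forall X a, directed le X -> mul (sup X) a = sup (image (fun x => mul x a) X)) /\
  (forall X a, directed le X -> mul a (sup X) = sup (image (fun x => mul a x) X)).

Definition inflator {A : Type} (le : A -> A -> Prop) (d : A -> A) : Prop :=
  (forall a b, le a b -> le (d a) (d b)) /\ (forall a, le a (d a)).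

Definition multiplicative_nucleus {A : Type} (le : A -> A -> Prop)
  (meet : A -> A -> A) (mul : A -> A -> A) (d : A -> A) : Prop :=
  inflator le d /\
  (forall a, d (d a) = d a) /\
  (forall a b, d (meet a b) = meet (d a) (d b)) /\
  (forall a b, d (mul a b) = meet (d a) (d b)).

Definition fixpoints {A : Type} (d : A -> A) : A -> Prop := fun a => d a = a.

(* Main.v *)
Require Import Defs.

Theorem proposition3p10 (A : Type) (le : A -> A -> Prop)
  (sup : (A -> Prop) -> A) (meet : A -> A -> A) (mul : A -> A -> A)
  (d : A -> A) :
  quasi_quantale le sup meet mul ->
  multiplicative_nucleus le meet mul d ->
  (* A_d is a lattice: joins d(\/X) are least upper bounds in A_d,
     meets computed in A stay in A_d and are glbs there *)
  (forall X : A -> Prop, (forall x, X x -> fixpoints d x) ->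
     fixpoints d (d (sup X)) /\ is_ub le X (d (sup X)) /\
     (forall z, fixpoints d z -> is_ub le X z -> le (d (sup X)) z)) /\
  (forall a b, fixpoints d a -> fixpoints d b -> fixpoints d (meet a b)) /\
  (* meet-continuity *)
  (forall (X : A -> Prop) (a : A),
     (forall x, X x -> fixpoints d x) -> directed le X -> fixpoints d a ->
     meet (d (sup X)) a = d (sup (image (fun x => meet x a) X))).
Proof.
  intros [[Hrefl [Htrans [Hanti [Hsup Hmeet]]]] [Hassoc [HdistL HdistR]]]
         [[Hmono Hinfl] [Hidem [Hdmeet Hdmul]]].
  unfold fixpoints.
  split; [|split].
  - intros X HX. split; [apply Hidem|]. split.
    + intros y Hy. apply Htrans with (sup X); [apply (proj1 (Hsup X)); exact Hy | apply Hinfl].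
    + intros z Hz Hub. rewrite <- Hz. apply Hmono. apply (proj2 (Hsup X)). exact Hub.
  - intros a b Ha Hb. rewrite Hdmeet, Ha, Hb. reflexivity.
  - intros X a HX Hdir Ha.
    assert (E : meet (d (sup X)) a = d (sup (image (fun x => mul x a) X))).
    { rewrite <- HdistL by exact Hdir. rewrite Hdmul, Ha. reflexivity. }
    rewrite E.
    assert (Hxa : forall x, X x -> d (mul x a) = meet x a).
    { intros x Hx. rewrite Hdmul, (HX x Hx), Ha. reflexivity. }
    apply Hanti.
    + apply Hmono. apply (proj2 (Hsup _)). intros y [x [Hx ->]].
      apply Htrans with (meet x a).
      * rewrite <- (Hxa x Hx). apply Hinfl.
      * apply (proj1 (Hsup _)). exists x. split; auto.
    + rewrite <- (Hidem (sup (image (fun x => mul x a) X))).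
      apply Hmono. apply (proj2 (Hsup _)). intros y [x [Hx ->]].
      rewrite <- (Hxa x Hx). apply Hmono. apply (proj1 (Hsup _)).
      exists x. split; auto.
Qed.
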